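(* Let $m$ be a prime power and let $l,s,t$ be positive integers such that $m\geq l-1$ and $2t-1\leq l$. Define $q=(s-1)m+1$. Suppose that $c\geq t$ is an integer such that $l=c(t-1)+r$ for some $r\in\{t,t+1,\ldots,c\}$. If there exists an $s$-ary $c$-frameproof code of length $l$ and cardinality $M$ satisfying Property $P(t)$, then there exists a $q$-ary $c$-frameproof code of length $l$ and cardinality $Mm^t$.
   Context: Let $F$ be a finite alphabet and $l$ a positive integer. For $P\subseteq F^l$, the set of descendants is $desc(P)=\{x\in F^l: \text{for every } i\in\{1,\ldots,l\} \text{ there is } y\in P \text{ with } x_i=y_i\}$. For an integer $c\geq 2$, a $c$-frameproof code is a subset $C\subseteq F^l$ such that $desc(P)\cap C=P$ for every $P\subseteq C$ with $|P|\leq c$. A code is $q$-ary if its alphabet has size $q$. An $s$-ary $c$-frameproof code $C$ of length $l$ over an alphabet $S$ of size $s$ satisfies Property $P(t)$ if there is a special element $\infty\in S$ such that every codeword contains at most $t-1$ coordinates equal to $\infty$, and every codeword is uniquely determined by specifying $t$ of its components that are not equal to $\infty$ (i.e., if $x,y\in C$ and there are $t$ coordinates $j$ with $x_j=y_j\neq\infty$, then $x=y$). *)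

(* Defs.v *)
From mathcomp Require Import all_boot.
Set Implicit Arguments. Unset Strict Implicit. Unset Printing Implicit Defensive.

Definition word (F : finType) (l : nat) := {ffun 'I_l -> F}.

Definition desc (F : finType) (l : nat) (P : {set word F l}) : {set word F l} :=
  [set x : word F l | [forall i : 'I_l, [exists y in P, x i == y i]]].

(* C is a c-frameproof code: desc(P) ∩ C = P for all P ⊆ C with |P| <= c.
   (The paper requires c >= 2; this is imposed as a hypothesis where used.) *)
Definition frameproof (F : finType) (l c : nat) (C : {set word F l}) : Prop :=
  forall P : {set word F l}, P \subset C -> #|P| <= c -> desc P :&: C = P.

Definition propertyP (S : finType) (l t : nat) (C : {set word S l}) : Prop :=
  exists inf : S,
    (forall x, x \in C -> #|[set j : 'I_l | x j == inf]| <= t - 1) /\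
    (forall x y, x \in C -> y \in C ->
       t <= #|[set j : 'I_l | (x j == y j) && (x j != inf)]| -> x = y).

Definition prime_power (m : nat) : Prop :=
  exists p k, prime p /\ 0 < k /\ m = p ^ k.

(* Main.v *)
Require Import Defs.
From mathcomp Require Import all_boot all_order all_algebra all_field.
From mathcomp Require Import zify.
Set Implicit Arguments. Unset Strict Implicit. Unset Printing Implicit Defensive.
Import GRing.Theory.

Lemma card_bigcup_le (I T : finType) (A : {pred I}) (F : I -> {set T}) :
  #|\bigcup_(i in A) F i| <= \sum_(i in A) #|F i|.
Proof.
apply: (big_rec2 (fun (U : {set T}) n => #|U| <= n)); first by rewrite cards0.
move=> i U n _ H; rewrite cardsU; lia.
Qed.

Section RS.
Variables (K : finFieldType) (t l : nat) (e : 'I_l -> option K).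
Hypothesis einj : injective e.

Local Open Scope ring_scope.

Definition cfa (a : {ffun 'I_t -> K}) (i : nat) : K := oapp a 0 (insub i).

Definition rsw (a : {ffun 'I_t -> K}) : word K l :=
  [ffun j => match e j with
             | Some x => (\poly_(i < t) cfa a i).[x]
             | None => (\poly_(i < t) cfa a i)`_t.-1 end].

Lemma rs_agree a a' : a != a' -> (#|[set j | rsw a j == rsw a' j]| <= t.-1)%N.
Proof.
move=> neq.
set d := \poly_(i < t) cfa a i - \poly_(i < t) cfa a' i.
have dn0 : d != 0.
  apply: contra neq => /eqP d0; apply/eqP/ffunP => i.
  have := congr1 (fun p : {poly K} => p`_i) d0.
  by rewrite coefB !coef_poly ltn_ord coef0 /cfa valK /= => /eqP; rewrite subr_eq0 => /eqP.
have szd : (size d <= t)%N.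
  rewrite /d; apply: leq_trans (size_polyD _ _) _.
  by rewrite size_polyN geq_max !size_poly.
have szd0 : (0 < size d)%N by rewrite size_poly_gt0.
set R := [set x : K | root d x].
have hR : (#|R| < size d)%N.
  rewrite cardE; apply: max_poly_roots => //; last exact: enum_uniq.
  by apply/allP => x; rewrite mem_enum inE.
set N : {set option K} := if d`_t.-1 == 0 then [set None] else set0.
set A := [set j | rsw a j == rsw a' j].
have sub : e @: A \subset (Some @: R) :|: N.
  apply/subsetP => o /imsetP [j]; rewrite inE /rsw !ffunE => /eqP hj ->.
  move: hj; case: (e j) => [x|] hj; rewrite inE.
    apply/orP; left; apply/imsetP; exists x => //.
    by rewrite inE /root /d hornerD hornerN hj subrr.
  by apply/orP; right; rewrite /N /d coefB hj subrr eqxx inE.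
have cA : #|A| = #|e @: A| by rewrite card_imset.
have := subset_leq_card sub; rewrite -cA => h.
apply: leq_trans h _; rewrite cardsU card_imset; last by move=> ? ? [].

rewrite /N; case: ifP => hc.
  have : (size d <= t.-1)%N.
    rewrite leqNgt; apply/negP => ht.
    have ht' : size d = t by lia.
    by move: dn0; rewrite -lead_coef_eq0 lead_coefE ht' (eqP hc) eqxx.
  rewrite cards1; lia.
rewrite cards0; lia.
Qed.

End RS.

Theorem lemma1 (m l s t c r M : nat) :
  prime_power m -> 0 < l -> 0 < s -> 0 < t ->
  l - 1 <= m -> 2 * t - 1 <= l ->
  2 <= c -> t <= c ->
  t <= r <= c -> l = c * (t - 1) + r ->
  (exists (S : finType) (C : {set word S l}),
      #|S| = s /\ frameproof c C /\ propertyP t C /\ #|C| = M) ->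
  exists (F : finType) (C : {set word F l}),
    #|F| = (s - 1) * m + 1 /\ frameproof c C /\ #|C| = M * m ^ t.
Proof.
move=> [p [k [pp [k0 ->]]]] l0 s0 t0 hlm h2t _ htc /andP [htr _] hl.
move=> [S [C [cS [_ [[inf [hinf huniq]] cC]]]]].
have [K _ cK] := pPrimePowerField pp k0.
set mm := p ^ k in hlm cK *.
have hle : l <= #|{: option K}| by rewrite card_option cK; lia.
pose e (j : 'I_l) : option K := enum_val (widen_ord hle j).
have einj : injective e.
  move=> i j /enum_val_inj /(congr1 val) /= h; exact: val_inj.
pose S' := {x : S | x != inf}.
pose Fty := option (S' * K)%type.
pose D := setX C [set: {ffun 'I_t -> K}].
pose phi (xa : word S l * {ffun 'I_t -> K}) : word Fty l :=
  [ffun j => match insub (xa.1 j) with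
             | Some u => Some (u, rsw e xa.2 j)
             | None => None end].
have phiN xa j : (phi xa j == None) = (xa.1 j == inf).
  rewrite /phi ffunE; case: insubP => [u hu _|].
    by rewrite (negbTE hu).
  by rewrite negbK => ->.
have hinfD xa : xa \in D -> #|[set j | phi xa j == None]| <= t - 1.
  case: xa => x a /setXP [hx _]; apply: leq_trans (hinf _ hx).
  by apply/subset_leq_card/subsetP => j; rewrite !inE phiN.
have key xa ya : xa \in D -> ya \in D -> xa != ya ->
    #|[set j | (phi xa j == phi ya j) && (phi xa j != None)]| <= t - 1.
  case: xa ya => [x a] [y b] /setXP [hx _] /setXP [hy _] hne.
  have H j : (phi (x, a) j == phi (y, b) j) && (phi (x, a) j != None) ->
      [/\ x j == y j, x j != inf & rsw e a j == rsw e b j].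
    rewrite /phi !ffunE /=.
    case: insubP => [u hu hux|//]; case: insubP => [v hv hvy|//].
    case/andP => /eqP [huv hab] _.
    by rewrite -hux huv hab hvy eqxx hv.
  by move=> _; rewrite andbF.
  have [exy|nxy] := eqVneq x y.
    subst y; have nab : a != b by apply: contra hne => /eqP ->.
    have := rs_agree einj nab; rewrite -subn1 => h2; apply: leq_trans h2.
    apply/subset_leq_card/subsetP => j; rewrite !inE => /H [_ _ ->] //.
  rewrite leqNgt; apply/negP => hlt; move/eqP: nxy; apply.
  apply: huniq => //; have ht : t <= #|[set j | (phi (x, a) j == phi (y, b) j) && (phi (x, a) j != None)]| by lia.
  apply: leq_trans ht _.
  apply/subset_leq_card/subsetP => j; rewrite !inE => /H [-> -> _] //.
have phiinj : {in D &, injective phi}.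
  move=> xa ya hx hy hxy; apply/eqP; apply/negPn/negP => hne.
  have := key _ _ hx hy hne; rewrite hxy.
  have -> : [set j | (phi ya j == phi ya j) && (phi ya j != None)] =
            ~: [set j | phi ya j == None] by apply/setP => j; rewrite !inE eqxx.
  have := cardsC [set j | phi ya j == None]; rewrite card_ord.
  have := hinfD _ hy; rewrite -hxy; lia.
exists Fty, (phi @: D); split; [|split].
- rewrite card_option card_prod card_sig cK.
  have := cardC1 inf; rewrite cS => hc1.
  have -> : #|[pred x | x != inf]| = s - 1 by rewrite subn1 -hc1; apply: eq_card => x; rewrite !inE.
  by rewrite addn1.
- move=> P sPC cP; apply/setP => z; rewrite inE.
  case hz: (z \in P).
    rewrite (subsetP sPC _ hz) andbT inE; apply/forallP => i.
    by apply/existsP; exists z; rewrite hz eqxx.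
  apply/negP => /andP [hd /imsetP [xa hxa hzx]]; subst z.
  pose Ns := [set j | phi xa j == None].
  pose Bs := \bigcup_(y in P) [set j | (phi xa j == y j) && (phi xa j != None)].
  have cover : [set: 'I_l] \subset Ns :|: Bs.
    apply/subsetP => j _; move: hd; rewrite inE => /forallP /(_ j) /existsP [y /andP [hy hj]].
    rewrite !inE; case hN: (phi xa j == None) => //=.
    by apply/bigcupP; exists y => //; rewrite inE hj hN.
  have := subset_leq_card cover; rewrite cardsT card_ord => hc.
  have hb : #|Bs| <= #|P| * (t - 1).
    apply: leq_trans (card_bigcup_le _ _) _; rewrite -sum_nat_const; apply: leq_sum => y hy.
    have /imsetP [ya hya eqy] := subsetP sPC _ hy; rewrite eqy.
    by apply: key => //; apply/eqP => exy; move: hz; rewrite exy -eqy hy.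
  have hN : #|Ns| <= t - 1 by apply: hinfD.
  have hU : #|Ns :|: Bs| <= #|Ns| + #|Bs| by rewrite cardsU leq_subr.
  have : #|P| * (t - 1) <= c * (t - 1) by apply: leq_mul.
  move: hl htr hb hN hU hc; set w := t - 1; set u := #|P| * w; set v := c * w.
  have : t = w + 1 by rewrite /w; lia.
  clearbody w u v => ht hl2 htr2 hb2 hN2 hU2 hc2 huv.
  have h1 := leq_trans hc2 (leq_trans hU2 (leq_add hN2 (leq_trans hb2 huv))).
  move: h1; rewrite hl2; clear -ht htr2; lia.
- rewrite card_in_imset // cardsX cardsT card_ffun card_ord cK cC //.
Qed.
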